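(* Let $f\colon G\to H$ be an epimorphism between graphs. Then there are a graph $M$ and epimorphisms $m\colon G\to M$ and $l\colon M\to H$ such that $f=l\circ m$, $m$ is monotone and $l$ is light.
   Context: A graph is a pair $A=(V(A),E(A))$ with $E(A)\subseteq V(A)^2$ reflexive and symmetric. An epimorphism is a map on vertices sending edges to edges that is surjective on vertices and on edges. A set $S\subseteq V(G)$ is disconnected if $S=P\cup Q$ with $P,Q$ nonempty disjoint and no edge of $G$ between $P$ and $Q$; otherwise connected. An epimorphism is monotone if the preimage of every connected set is connected. An epimorphism $f\colon G\to H$ is light if for every $h\in V(H)$ and distinct $a,b\in f^{-1}(h)$ we have $\langle a,b\rangle\notin E(G)$. *)

(* Defs.v *)
Record graph := Graph {
  V : Type;
  E : V -> V -> Prop;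
  E_refl : forall x, E x x;
  E_sym : forall x y, E x y -> E y x
}.

Definition homomorphism {G H : graph} (f : V G -> V H) : Prop :=
  forall a b, E G a b -> E H (f a) (f b).

Definition epimorphism {G H : graph} (f : V G -> V H) : Prop :=
  homomorphism f /\
  (forall h, exists g, f g = h) /\
  (forall h1 h2, E H h1 h2 -> exists g1 g2, E G g1 g2 /\ f g1 = h1 /\ f g2 = h2).

Definition disconnected {G : graph} (S : V G -> Prop) : Prop :=
  exists P Q : V G -> Prop,
    (forall x, S x <-> (P x \/ Q x)) /\
    (exists x, P x) /\ (exists y, Q y) /\
    (forall x, ~ (P x /\ Q x)) /\
    (forall x y, P x -> Q y -> ~ E G x y).

Definition connected {G : graph} (S : V G -> Prop) : Prop := ~ disconnected S.

Definition monotone {G H : graph} (f : V G -> V H) : Prop :=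
  epimorphism f /\
  forall S : V H -> Prop, connected S -> connected (fun x => S (f x)).

Definition light {G H : graph} (f : V G -> V H) : Prop :=
  epimorphism f /\
  forall h (a b : V G), f a = h -> f b = h -> a <> b -> ~ E G a b.

(* Main.v *)
Require Import Defs.
From Stdlib Require Import Relations ClassicalEpsilon FunctionalExtensionality PropExtensionality ProofIrrelevance.

Section S.
Variables (G H : graph) (f : V G -> V H).

Definition step (a b : V G) : Prop := E G a b /\ f a = f b.
Definition R := clos_refl_trans _ step.

Lemma R_sym a b : R a b -> R b a.
Proof.
  induction 1.
  - apply rt_step. destruct H0; split; [apply E_sym; auto | auto].
  - apply rt_refl.
  - eapply rt_trans; eauto.
Qed.

Lemma R_f a b : R a b -> f a = f b.
Proof. induction 1; [destruct H0; auto | auto | congruence]. Qed.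

Definition MV := { C : V G -> Prop | exists x, C = R x }.
Definition ME (C D : MV) : Prop :=
  exists x y, proj1_sig C x /\ proj1_sig D y /\ E G x y.

Lemma ME_refl C : ME C C.
Proof.
  destruct C as [C [x ->]]. exists x, x; simpl; repeat split; try apply rt_refl; apply E_refl.
Qed.
Lemma ME_sym C D : ME C D -> ME D C.
Proof. intros (x & y & h1 & h2 & h3). exists y, x; repeat split; auto; apply E_sym; auto. Qed.

Definition M : graph := Graph MV ME ME_refl ME_sym.

Definition m (x : V G) : V M := exist _ (R x) (ex_intro _ x eq_refl).

Lemma m_eq a b : R a b -> m a = m b.
Proof.
  intro h. unfold m.
  assert (e : R a = R b).
  { apply functional_extensionality; intro z; apply propositional_extensionality; split; intro.
    - eapply rt_trans; [apply R_sym; eauto | auto].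
    - eapply rt_trans; eauto. }
  apply eq_exist_uncurried. exists e. try apply proof_irrelevance.
Qed.

Lemma m_in (C : V M) x : proj1_sig C x -> m x = C.
Proof.
  destruct C as [C [y e]]. simpl. intro h. subst C.
  transitivity (m y). apply m_eq, R_sym, h.
  reflexivity.
Qed.

Lemma m_surj (C : V M) : exists x, m x = C.
Proof.
  destruct C as [C0 [y e]]. exists y. apply m_in. simpl. subst. apply rt_refl.
Qed.

Definition l (C : V M) : V H := f (proj1_sig (constructive_indefinite_description _ (m_surj C))).

Lemma l_m x : l (m x) = f x.
Proof.
  unfold l. destruct (constructive_indefinite_description _ _) as [y e]. simpl.
  assert (h : proj1_sig (m y) x) by (rewrite e; simpl; apply rt_refl).
  simpl in h. apply R_f in h. auto.
Qed.

Lemma path_lemma (S : V M -> Prop) (P Q : V G -> Prop) :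
  (forall x, S (m x) <-> P x \/ Q x) ->
  (forall x y, P x -> Q y -> ~ E G x y) ->
  forall a b, R a b -> S (m a) -> P a -> P b.
Proof.
  intros hc hn a b hr. apply clos_rt_rt1n in hr. induction hr; intros hs hp; auto.
  assert (e : m x = m y) by (apply m_eq, rt_step; auto).
  rewrite e in hs. apply IHhr; auto.
  destruct (proj1 (hc y) hs) as [|hq]; auto.
  exfalso. destruct H0. eapply hn; eauto.
Qed.

End S.

Theorem proposition4p14 (G H : graph) (f : V G -> V H) :
  epimorphism f ->
  exists (M : graph) (m : V G -> V M) (l : V M -> V H),
    epimorphism m /\ epimorphism l /\
    (forall x, f x = l (m x)) /\
    monotone m /\ light l.
Proof.
  intros [fh [fs fe]].
  assert (mepi : epimorphism (m G H f)).
  { split; [|split].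
    - intros a b hab. exists a, b; simpl; repeat split; try apply rt_refl; auto.
    - apply m_surj.
    - intros C D (x & y & hx & hy & hxy). exists x, y. repeat split; auto; apply m_in; auto. }
  exists (M G H f), (m G H f), (l G H f).
  assert (lepi : epimorphism (l G H f)).
  { split; [|split].
    - intros C D (x & y & hx & hy & hxy).
      rewrite <- (m_in G H f C x hx), <- (m_in G H f D y hy), !l_m. apply fh; auto.
    - intro h. destruct (fs h) as [g <-]. exists (m G H f g). apply l_m.
    - intros h1 h2 e. destruct (fe h1 h2 e) as (g1 & g2 & e' & <- & <-).
      exists (m G H f g1), (m G H f g2). repeat split; try apply l_m. apply (proj1 mepi); auto. }
  split; [auto|split; [auto|split; [|split]]].
  - intro x. rewrite l_m. auto.
  - split; auto. intros S hS [P [Q (hc & [x0 hx0] & [y0 hy0] & hd & hn)]].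
    apply hS.
    exists (fun C => exists x, m G H f x = C /\ P x), (fun C => exists x, m G H f x = C /\ Q x).
    split; [|split; [|split; [|split]]].
    + intro C. split.
      * intro hs. destruct (m_surj G H f C) as [x <-].
        destruct (proj1 (hc x) hs); [left|right]; eauto.
      * intros [[x [<- hp]]|[x [<- hq]]]; apply (proj2 (hc x)); auto.
    + eauto.
    + eauto.
    + intros C [[x [<- hp]] [y [e hq]]].
      assert (hr : R G H f x y).
      { assert (h : proj1_sig (m G H f x) y) by (rewrite <- e; simpl; apply rt_refl). exact h. }
      apply (hd y). split; auto.
      eapply (path_lemma G H f S P Q); eauto. apply (proj2 (hc x)); auto.
    + intros C D [x [<- hp]] [y [<- hq]] (u & v & hu & hv & huv).
      simpl in hu, hv.
      assert (pu : P u).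
      { eapply (path_lemma G H f S P Q); eauto. apply (proj2 (hc x)); auto. }
      assert (qv : Q v).
      { eapply (path_lemma G H f S Q P); eauto.
        - intro z. rewrite (hc z). tauto.
        - intros a b ha hb hab. eapply hn; eauto. apply E_sym; auto.
        - apply (proj2 (hc y)); auto. }
      eapply hn; eauto.
  - split; auto. intros h C D eC eD neq (x & y & hx & hy & hxy).
    rewrite <- (m_in G H f C x hx) in eC, neq. rewrite <- (m_in G H f D y hy) in eD, neq.
    rewrite l_m in eC, eD. apply neq. apply m_eq, rt_step. split; auto. congruence.
Qed.
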